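(* Let $G=(V,E)$ be a graph on $n$ vertices with adjacency matrix $A_G$, let $\{e_v : v\in V\}$ be the standard basis of $\mathbb{C}^n$, and let $\{P_v\}_{v\in V}$ be a $d/r$-representation of $G$. Let $\Gamma$ be a random unitary matrix sampled from the Haar measure on $\mathrm{U}(d)$ and define $$Q = \sum_{v \in V} e_v e_v^* \otimes \Gamma^* P_v \Gamma \in \mathbb{C}^{n\times n}\otimes \mathbb{C}^{d\times d}.$$ Then $Q$ is a stochastic block decomposition of size $d/r$, and $Q(A_G\otimes I_d)Q = O$ (for every value of $\Gamma$).
   Context: A $d/r$-representation of $G$ is a family of rank-$r$ orthogonal projectors $P_v \in \mathbb{C}^{d\times d}$, $v \in V$, with $P_vP_w = O$ for every edge $vw$. $\mathrm{U}(d)$ is the group of $d\times d$ complex unitary matrices and the Haar measure is its unique left- and right-invariant probability measure. A stochastic block decomposition of size $\alpha$ is a random variable $Q$ defined on a probability space taking values in the set of orthogonal projection matrices in $\mathbb{C}^{N\times N}$ (for some $N$) such that the entrywise expectation satisfies $\mathbb{E}[Q] = \alpha^{-1} I$. *)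

(* Defs.v *)
From HB Require Import structures.
From mathcomp Require Import all_boot all_order all_algebra.
From mathcomp Require Import complex mxtens.
From mathcomp Require Import all_classical all_reals all_analysis.

Set Implicit Arguments.
Unset Strict Implicit.
Unset Printing Implicit Defensive.

Import Order.TTheory GRing.Theory Num.Theory.
Local Open Scope ring_scope.
Local Open Scope classical_set_scope.

Definition mxstar (R : rcfType) (m n : nat) (A : 'M[R[i]]_(m, n)) : 'M[R[i]]_(n, m) :=
  map_mx (@conjc R) A^T.

Definition unitary_mx (R : rcfType) (d : nat) (U : 'M[R[i]]_d) : Prop :=
  mxstar U *m U = 1%:M /\ U *m mxstar U = 1%:M.

Definition orth_proj (R : rcfType) (N : nat) (P : 'M[R[i]]_N) : Prop :=
  P *m P = P /\ mxstar P = P.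

Definition dr_representation (R : rcfType) (n d r : nat) (adj : rel 'I_n)
    (P : 'I_n -> 'M[R[i]]_d) : Prop :=
  (forall v, orth_proj (P v) /\ \rank (P v) = r) /\
  (forall v w, adj v w -> P v *m P w = 0).

Definition adjacency_mx (R : rcfType) (n : nat) (adj : rel 'I_n) : 'M[R[i]]_n :=
  \matrix_(v, w) (adj v w)%:R.

(* Carrier alias for C^{d x d}, made pointed (by 0) for the generated sigma-algebra. *)
Definition cmxT (R : realType) (d : nat) := 'M[R[i]]_d.
HB.instance Definition _ (R : realType) (d : nat) := Choice.on (cmxT R d).
HB.instance Definition _ (R : realType) (d : nat) :=
  isPointed.Build (cmxT R d) (0 : 'M[R[i]]_d).

(* Borel sigma-algebra on C^{d x d} = R^{2 d^2}: generated by the preimages of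
   Borel sets of R under the real and imaginary parts of the entries. *)
Definition cmx_gen (R : realType) (d : nat) : set (set (cmxT R d)) :=
  [set A | exists (k l : 'I_d) (B : set R), measurable B /\
     (A = (fun M : cmxT R d => complex.Re (M k l)) @^-1` B \/
      A = (fun M : cmxT R d => complex.Im (M k l)) @^-1` B)].

Notation cmx R d := (g_sigma_algebraType (@cmx_gen R d)).

(* mu is (the) Haar measure on U(d), viewed as a (probability) set function on
   C^{d x d}: total mass one, concentrated on U(d), and invariant under left and
   right multiplication by unitaries. *)
Definition is_haar (R : realType) (d : nat) (mu : set (cmx R d) -> \bar R) : Prop :=
  mu setT = 1%E /\
  (exists S : set (cmx R d), measurable S /\ S `<=` [set U | unitary_mx U] /\ mu S = 1%E) /\
  (forall U : 'M[R[i]]_d, unitary_mx U -> forall A : set (cmx R d), measurable A ->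
     mu ((fun M : cmx R d => (U *m M : cmx R d)) @^-1` A) = mu A /\
     mu ((fun M : cmx R d => (M *m U : cmx R d)) @^-1` A) = mu A).

Definition mx_integrable (R : realType) (dO : measure_display) (O : measurableType dO)
    (P : probability O R) (N : nat) (X : O -> 'M[R[i]]_N) : Prop :=
  forall k l : 'I_N,
    P.-integrable setT (fun w => (complex.Re (X w k l))%:E) /\
    P.-integrable setT (fun w => (complex.Im (X w k l))%:E).

Definition mx_expect (R : realType) (dO : measure_display) (O : measurableType dO)
    (P : probability O R) (N : nat) (X : O -> 'M[R[i]]_N) : 'M[R[i]]_N :=
  \matrix_(k, l) Complex (Rintegral P setT (fun w => complex.Re (X w k l)))
                         (Rintegral P setT (fun w => complex.Im (X w k l))).

Definition stochastic_block_decomposition (R : realType) (dO : measure_display)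
    (O : measurableType dO) (P : probability O R) (N : nat)
    (Q : O -> 'M[R[i]]_N) (alpha : R) : Prop :=
  (forall w, orth_proj (Q w)) /\ mx_integrable P Q /\
  mx_expect P Q = (Complex (alpha^-1) 0)%:M.

Definition Qmx (R : rcfType) (n d : nat) (P : 'I_n -> 'M[R[i]]_d) (G : 'M[R[i]]_d)
    : 'M[R[i]]_(n * d) :=
  \sum_(v < n) (delta_mx v v *t (mxstar G *m P v *m G)).

(* Main.v *)
Require Import Defs.
From HB Require Import structures.
From mathcomp Require Import all_boot all_order all_algebra all_fingroup.
From mathcomp Require Import complex mxtens ring lra.
From mathcomp Require Import all_classical all_reals all_analysis measurable_realfun.
Import Order.TTheory GRing.Theory Num.Theory.
Local Open Scope ring_scope.
Local Open Scope classical_set_scope.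

Section Cplx.
Variable R : realType.
Lemma cReD (a b : R[i]) : complex.Re (a + b) = complex.Re a + complex.Re b.
Proof. by case: a; case: b. Qed.
Lemma cImD (a b : R[i]) : complex.Im (a + b) = complex.Im a + complex.Im b.
Proof. by case: a; case: b. Qed.
Lemma cReM (a b : R[i]) : complex.Re (a * b) =
  complex.Re a * complex.Re b - complex.Im a * complex.Im b.
Proof. by case: a; case: b. Qed.
Lemma cImM (a b : R[i]) : complex.Im (a * b) =
  complex.Re a * complex.Im b + complex.Im a * complex.Re b.
Proof. by case: a => ? ?; case: b => ? ? /=; rewrite addrC. Qed.
Lemma cRe0 : complex.Re (0 : R[i]) = 0. Proof. by []. Qed.
Lemma cIm0 : complex.Im (0 : R[i]) = 0. Proof. by []. Qed.
Lemma cReS I (s : seq I) (F : I -> R[i]) :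
  complex.Re (\sum_(i <- s) F i) = \sum_(i <- s) complex.Re (F i).
Proof.
elim: s => [|a s IH]; first by rewrite !big_nil.
by rewrite !big_cons cReD IH.
Qed.
Lemma cImS I (s : seq I) (F : I -> R[i]) :
  complex.Im (\sum_(i <- s) F i) = \sum_(i <- s) complex.Im (F i).
Proof.
elim: s => [|a s IH]; first by rewrite !big_nil.
by rewrite !big_cons cImD IH.
Qed.
Lemma cReJ (a : R[i]) : complex.Re (a^*)%C = complex.Re a.
Proof. by case: a. Qed.
Lemma cImJ (a : R[i]) : complex.Im (a^*)%C = - complex.Im a.
Proof. by case: a. Qed.
Lemma complex_eta (a : R[i]) : a = Complex (complex.Re a) (complex.Im a).
Proof. by case: a. Qed.
End Cplx.

Section Meas.
Variable R : realType.
Context dT (T : measurableType dT).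

Definition cmeas (f : T -> R[i]) :=
  measurable_fun setT (fun x => complex.Re (f x)) /\
  measurable_fun setT (fun x => complex.Im (f x)).

Lemma cmeas_cst c : cmeas (fun _ => c).
Proof. by split; apply: measurable_cst. Qed.

Lemma cmeasD f g : cmeas f -> cmeas g -> cmeas (fun x => f x + g x).
Proof.
move=> [f1 f2] [g1 g2]; split.
- rewrite (_ : (fun x => _) = (fun x => complex.Re (f x)) \+ (fun x => complex.Re (g x))).
    exact: measurable_realfun.measurable_funD.
  by apply/funext => x; rewrite cReD.
- rewrite (_ : (fun x => _) = (fun x => complex.Im (f x)) \+ (fun x => complex.Im (g x))).
    exact: measurable_realfun.measurable_funD.
  by apply/funext => x; rewrite cImD.
Qed.

Lemma cmeasM f g : cmeas f -> cmeas g -> cmeas (fun x => f x * g x).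
Proof.
move=> [f1 f2] [g1 g2]; split.
- rewrite (_ : (fun x => _) = ((fun x => complex.Re (f x)) \* (fun x => complex.Re (g x)))
     \- ((fun x => complex.Im (f x)) \* (fun x => complex.Im (g x)))).
    by apply: measurable_realfun.measurable_funB; apply: measurable_realfun.measurable_funM.
  by apply/funext => x; rewrite cReM.
- rewrite (_ : (fun x => _) = ((fun x => complex.Re (f x)) \* (fun x => complex.Im (g x)))
     \+ ((fun x => complex.Im (f x)) \* (fun x => complex.Re (g x)))).
    by apply: measurable_realfun.measurable_funD; apply: measurable_realfun.measurable_funM.
  by apply/funext => x; rewrite cImM.
Qed.

Lemma cmeasJ f : cmeas f -> cmeas (fun x => (f x)^*%C).
Proof.
move=> [f1 f2]; split.
- by rewrite (_ : (fun x => _) = (fun x => complex.Re (f x))) //; apply/funext => x; rewrite cReJ.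
- rewrite (_ : (fun x => _) = \- (fun x => complex.Im (f x))).
    exact: measurable_realfun.measurable_funN.
  by apply/funext => x; rewrite cImJ.
Qed.

Lemma cmeasS I (s : seq I) (F : I -> T -> R[i]) :
  (forall i, cmeas (F i)) -> cmeas (fun x => \sum_(i <- s) F i x).
Proof.
move=> hF; elim: s => [|a s IH].
  by under eq_fun do rewrite big_nil; exact: cmeas_cst.
under eq_fun do rewrite big_cons; exact: cmeasD.
Qed.

End Meas.
Arguments cmeas {R dT T}.


Section Exp.
Variable R : realType.
Context dO (O : measurableType dO) (Pr : probability O R).

Definition rb (f : O -> R) :=
  measurable_fun setT f /\ exists M : R, forall x, `|f x| <= M.

Lemma rb_cst c : rb (fun _ => c).
Proof. by split; [exact: measurable_cst | exists `|c|]. Qed.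

Lemma rbD f g : rb f -> rb g -> rb (fun x => f x + g x).
Proof.
move=> [mf [M hM]] [mg [N hN]]; split.
  exact: (measurable_realfun.measurable_funD mf mg).
by exists (M + N) => x; rewrite (le_trans (ler_normD _ _)) // lerD.
Qed.

Lemma rbN f : rb f -> rb (fun x => - f x).
Proof.
move=> [mf [M hM]]; split.
  exact: (measurable_realfun.measurable_funN mf).
by exists M => x; rewrite normrN.
Qed.

Lemma rbM f g : rb f -> rb g -> rb (fun x => f x * g x).
Proof.
move=> [mf [M hM]] [mg [N hN]]; split.
  exact: (measurable_realfun.measurable_funM mf mg).
exists (M * N) => x; rewrite normrM ler_pM //.
Qed.

Lemma rb_int f : rb f -> Pr.-integrable setT (EFin \o f).
Proof.
move=> [mf [M hM]]; apply: measurable_bounded_integrable => //.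
  exact: (le_lt_trans (probability_le1 _ measurableT) (ltry 1)).
exists M; split; first by rewrite num_real.
move=> y My z _; exact: le_trans (hM z) (ltW My).
Qed.

Notation Rint f := (Rintegral Pr setT f).

Lemma Rint_lin (a b : R) f g : rb f -> rb g ->
  Rint (fun w => a * f w + b * g w) = a * Rint f + b * Rint g.
Proof.
move=> hf hg.
rewrite RintegralD //; last 2 first.
- by apply: rb_int; apply: rbM => //; exact: rb_cst.
- by apply: rb_int; apply: rbM => //; exact: rb_cst.
by rewrite !RintegralZl //; apply: rb_int.
Qed.

Lemma Rint_cst c : Rint (fun _ => c) = c.
Proof.
rewrite Rintegral_cst // (_ : fine _ = 1) ?mulr1 //.
rewrite (_ : _ setT = 1%E) //; exact: probability_setT.
Qed.

Definition good (f : O -> R[i]) :=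
  rb (fun x => complex.Re (f x)) /\ rb (fun x => complex.Im (f x)).

Definition E (f : O -> R[i]) : R[i] :=
  Complex (Rint (fun w => complex.Re (f w))) (Rint (fun w => complex.Im (f w))).

Lemma good_cst c : good (fun _ => c).
Proof. by split; apply: rb_cst. Qed.

Lemma goodD f g : good f -> good g -> good (fun x => f x + g x).
Proof.
move=> [f1 f2] [g1 g2]; split.
  by under eq_fun do rewrite cReD; apply: rbD.
by under eq_fun do rewrite cImD; apply: rbD.
Qed.

Lemma goodM f g : good f -> good g -> good (fun x => f x * g x).
Proof.
move=> [f1 f2] [g1 g2]; split.
  by under eq_fun do rewrite cReM; apply: rbD; [apply: rbM|apply: rbN; apply: rbM].
by under eq_fun do rewrite cImM; apply: rbD; apply: rbM.
Qed.

Lemma goodJ f : good f -> good (fun x => (f x)^*%C).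
Proof.
move=> [f1 f2]; split.
  by under eq_fun do rewrite cReJ.
by under eq_fun do rewrite cImJ; apply: rbN.
Qed.

Lemma goodS I (s : seq I) (F : I -> O -> R[i]) :
  (forall i, good (F i)) -> good (fun x => \sum_(i <- s) F i x).
Proof.
move=> hF; elim: s => [|a s IH].
  by under eq_fun do rewrite big_nil; exact: good_cst.
under eq_fun do rewrite big_cons; exact: goodD.
Qed.

Lemma E_cst c : E (fun _ => c) = c.
Proof. by rewrite /E !Rint_cst -complex_eta. Qed.

Lemma ED f g : good f -> good g -> E (fun x => f x + g x) = E f + E g.
Proof.
move=> [f1 f2] [g1 g2]; rewrite /E; congr Complex.
- rewrite (_ : (fun w => _) = (fun w => 1 * complex.Re (f w) + 1 * complex.Re (g w))).
    by rewrite Rint_lin // !mul1r.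
  by apply/funext => w; rewrite cReD !mul1r.
- rewrite (_ : (fun w => _) = (fun w => 1 * complex.Im (f w) + 1 * complex.Im (g w))).
    by rewrite Rint_lin // !mul1r.
  by apply/funext => w; rewrite cImD !mul1r.
Qed.

Lemma EMl c f : good f -> E (fun x => c * f x) = c * E f.
Proof.
move=> [f1 f2]; rewrite /E.
rewrite (_ : (fun w => complex.Re (c * f w)) = (fun w =>
   complex.Re c * complex.Re (f w) + (- complex.Im c) * complex.Im (f w))); last first.
  by apply/funext => w; rewrite cReM mulNr.
rewrite (_ : (fun w => complex.Im (c * f w)) = (fun w =>
   complex.Re c * complex.Im (f w) + complex.Im c * complex.Re (f w))); last first.
  by apply/funext => w; rewrite cImM.
rewrite Rint_lin // Rint_lin //.
case: c => a b /=; congr Complex; ring.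
Qed.

Lemma EMr c f : good f -> E (fun x => f x * c) = E f * c.
Proof. by move=> hf; under eq_fun do rewrite mulrC; rewrite EMl // mulrC. Qed.

Lemma ES I (s : seq I) (F : I -> O -> R[i]) :
  (forall i, good (F i)) -> E (fun x => \sum_(i <- s) F i x) = \sum_(i <- s) E (F i).
Proof.
move=> hF; elim: s => [|a s IH].
  by under eq_fun do rewrite big_nil; rewrite big_nil E_cst.
under eq_fun do rewrite big_cons; rewrite ED ?IH ?big_cons //; exact: goodS.
Qed.

Lemma eq_E f g : (forall x, f x = g x) -> E f = E g.
Proof. by move=> h; rewrite (funext h). Qed.

End Exp.
Arguments rb {R dO O}.
Arguments good {R dO O}.
Arguments E {R dO O}.


Section MxMeas.
Variable R : realType.
Context dT (T : measurableType dT).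

Definition cmeasmx m n (X : T -> 'M[R[i]]_(m, n)) := forall i j, cmeas (fun x => X x i j).
Arguments cmeasmx {m n}.

Lemma cmeasmx_cst m n (A : 'M[R[i]]_(m, n)) : cmeasmx (fun _ => A).
Proof. by move=> i j; exact: cmeas_cst. Qed.

Lemma cmeasmx_mul m n p (X : T -> 'M[R[i]]_(m, n)) (Y : T -> 'M[R[i]]_(n, p)) :
  cmeasmx X -> cmeasmx Y -> cmeasmx (fun x => X x *m Y x).
Proof.
move=> hX hY i j; under eq_fun do rewrite mxE.
by apply: cmeasS => k; apply: cmeasM.
Qed.

Lemma cmeasmx_star m n (X : T -> 'M[R[i]]_(m, n)) :
  cmeasmx X -> cmeasmx (fun x => mxstar (X x)).
Proof.
move=> hX i j; under eq_fun do rewrite /mxstar !mxE.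
exact: cmeasJ.
Qed.
End MxMeas.

Section MxExp.
Variable R : realType.
Context dO (O : measurableType dO) (Pr : probability O R).

Definition goodmx m n (X : O -> 'M[R[i]]_(m, n)) := forall i j, good (fun x => X x i j).
Arguments goodmx {m n}.

Lemma goodmx_cst m n (A : 'M[R[i]]_(m, n)) : goodmx (fun _ => A).
Proof. by move=> i j; exact: good_cst. Qed.

Lemma goodmx_mul m n p (X : O -> 'M[R[i]]_(m, n)) (Y : O -> 'M[R[i]]_(n, p)) :
  goodmx X -> goodmx Y -> goodmx (fun x => X x *m Y x).
Proof.
move=> hX hY i j; under eq_fun do rewrite mxE.
by apply: goodS => k; apply: goodM.
Qed.

Lemma goodmx_star m n (X : O -> 'M[R[i]]_(m, n)) :
  goodmx X -> goodmx (fun x => mxstar (X x)).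
Proof.
move=> hX i j; under eq_fun do rewrite /mxstar !mxE.
exact: goodJ.
Qed.

Lemma mx_expectE N (X : O -> 'M[R[i]]_N) i j :
  mx_expect Pr X i j = E Pr (fun w => X w i j).
Proof. by rewrite mxE. Qed.

Lemma mx_expect_mul N (A B : 'M[R[i]]_N) (X : O -> 'M[R[i]]_N) :
  goodmx X -> mx_expect Pr (fun w => A *m X w *m B) = A *m mx_expect Pr X *m B.
Proof.
move=> hX; apply/matrixP => i j; rewrite mx_expectE.
under eq_E do rewrite mxE.
rewrite ES; last first.
  move=> k; apply: goodM; last exact: good_cst.
  under eq_fun do rewrite mxE; apply: goodS => l; apply: goodM => //; exact: good_cst.
rewrite mxE; apply: eq_bigr => k _.
rewrite EMr; last first.
  under eq_fun do rewrite mxE; apply: goodS => l; apply: goodM => //; exact: good_cst.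
congr (_ * _); under eq_E do rewrite mxE.
rewrite ES; last by move=> l; apply: goodM => //; exact: good_cst.
rewrite mxE; apply: eq_bigr => l _; rewrite EMl // mx_expectE //.
Qed.

Lemma goodmx_integrable N (X : O -> 'M[R[i]]_N) : goodmx X -> mx_integrable Pr X.
Proof. by move=> hX k l; have [h1 h2] := hX k l; split; apply: rb_int. Qed.

End MxExp.
Arguments cmeasmx {R dT T m n}. Arguments goodmx {R dO O m n}.
Arguments cmeasmx_cst {R dT T m n}.
Arguments cmeasmx_mul {R dT T m n p X Y}.
Arguments cmeasmx_star {R dT T m n X}.
Arguments goodmx_cst {R dO O m n}.
Arguments goodmx_mul {R dO O m n p X Y}.
Arguments goodmx_star {R dO O m n X}.
Arguments mx_expect_mul {R dO O Pr N} A B {X}.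
Arguments mx_expectE {R dO O Pr N} X.


Section Cmx.
Variable R : realType.
Variable d : nat.

Lemma cmx_entry k l : cmeas (fun M : cmx R d => M k l).
Proof.
split => _ B mB; rewrite setTI; apply: sub_sigma_algebra; exists k, l, B; split => //.
  by left.
by right.
Qed.

Lemma cmx_id : cmeasmx (fun M : cmx R d => (M : 'M[R[i]]_d)).
Proof. exact: cmx_entry. Qed.

Lemma meas_into_cmx dT (T : measurableType dT) (phi : T -> cmx R d) :
  cmeasmx (phi : T -> 'M[R[i]]_d) -> measurable_fun setT phi.
Proof.
move=> hX; apply: (@measurability _ _ _ (cmx R d) _ _ (@cmx_gen R d)) => //.
move=> _ [A [k [l [B [mB [->|->]]]]] <-].
- exact: (hX k l).1.
- exact: (hX k l).2.
Qed.

Lemma cmeasmx_comp dT (T : measurableType dT) m n (phi : T -> cmx R d)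
    (h : cmx R d -> 'M[R[i]]_(m, n)) :
  measurable_fun setT phi -> cmeasmx h -> cmeasmx (fun x => h (phi x)).
Proof.
move=> mphi hh i j; have [h1 h2] := hh i j; split.
- exact: (measurableT_comp h1 mphi).
- exact: (measurableT_comp h2 mphi).
Qed.

End Cmx.


Section Haar.
Variable R : realType.
Variable d : nat.
Context dO (O : measurableType dO) (Pr : probability O R).
Variable Gamma : O -> cmx R d.
Hypothesis mGamma : measurable_fun setT Gamma.
Hypothesis Gamma_haar : is_haar (fun A : set (cmx R d) => Pr (Gamma @^-1` A)).

Lemma mulU_meas (U : 'M[R[i]]_d) :
  measurable_fun setT (fun M : cmx R d => (M *m U : cmx R d)).
Proof.
apply: meas_into_cmx => i j.
exact: (@cmeasmx_mul R _ (cmx R d) d d d (fun M => M) (fun _ => U) (@cmx_id R d) (@cmeasmx_cst R _ (cmx R d) d d U) i j).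
Qed.

Lemma haar_inv (U : 'M[R[i]]_d) : unitary_mx U ->
  forall h : cmx R d -> R, measurable_fun setT h ->
  rb (fun w => h (Gamma w)) -> rb (fun w => h (Gamma w *m U : cmx R d)) ->
  Rintegral Pr setT (fun w => h (Gamma w *m U : cmx R d)) =
  Rintegral Pr setT (fun w => h (Gamma w)).
Proof.
move=> uU h mh rb1 rb2.
have mGU : measurable_fun setT (fun w => (Gamma w *m U : cmx R d)).
  exact: (measurableT_comp (mulU_meas U) mGamma).
have mEh : measurable_fun setT (fun M : cmx R d => (h M)%:E).
  exact: measurableT_comp.
rewrite /Rintegral; congr fine.
have e1 := integral_pushforward (mu:=Pr) (D:=setT) mGU mEh.
have e2 := integral_pushforward (mu:=Pr) (D:=setT) mGamma mEh.
rewrite preimage_setT in e1 e2.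
rewrite -[LHS]e1 ?rb_int // -[RHS]e2 ?rb_int //.
apply: eq_measure_integral => A mA _.
have [_ [_ hinv]] := Gamma_haar.
exact: (hinv U uU A mA).2.
Qed.

End Haar.


Lemma proj_aux (F : fieldType) m r (C : 'M[F]_(m, r)) (B : 'M[F]_(r, m))
  (X : 'M[F]_(r, m)) (Y : 'M[F]_(m, r)) :
  X *m C = 1%:M -> B *m Y = 1%:M -> (C *m B) *m (C *m B) = C *m B -> B *m C = 1%:M.
Proof.
move=> hX hY h.
have e : X *m ((C *m B) *m (C *m B)) *m Y = X *m (C *m B) *m Y by rewrite h.
move: e; rewrite !mulmxA hX !mul1mx -!mulmxA hY !mulmx1 => ->.
by [].
Qed.

Lemma tr_proj (F : fieldType) n (P : 'M[F]_n) : P *m P = P -> \tr P = (\rank P)%:R.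
Proof.
move=> PP; have eP := mulmx_base P.
have [X hX] := row_fullP (col_base_full P).
have [Y hY] := row_freeP (row_base_free P).
have BC := proj_aux _ _ _ _ _ _ _ hX hY (etrans (congr1 (fun M => M *m M) eP) (etrans PP (esym eP))).
by rewrite -{1}eP mxtrace_mulC BC mxtrace1.
Qed.

Section Star.
Variable R : realType.

Lemma mxstarM m n p (A : 'M[R[i]]_(m, n)) (B : 'M[R[i]]_(n, p)) :
  mxstar (A *m B) = mxstar B *m mxstar A.
Proof. by rewrite /mxstar trmx_mul map_mxM. Qed.

Lemma mxstarK m n (A : 'M[R[i]]_(m, n)) : mxstar (mxstar A) = A.
Proof. by apply/matrixP => i j; rewrite /mxstar !mxE conjcK. Qed.

Lemma mxstar_tens m n p q (A : 'M[R[i]]_(m, n)) (B : 'M[R[i]]_(p, q)) :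
  mxstar (A *t B) = mxstar A *t mxstar B.
Proof. by rewrite /mxstar trmx_tens map_mxT. Qed.

Lemma mxstar_nat (k : nat) : ((k%:R : R[i])^*)%C = k%:R.
Proof. exact: rmorph_nat. Qed.

Lemma mxstar_delta m n (i : 'I_m) (j : 'I_n) :
  mxstar (delta_mx i j : 'M[R[i]]_(m, n)) = delta_mx j i.
Proof. by apply/matrixP => a b; rewrite /mxstar !mxE mxstar_nat andbC. Qed.

Lemma mxstar_tperm n (i j : 'I_n) : mxstar (tperm_mx i j : 'M[R[i]]_n) = tperm_mx i j.
Proof. by rewrite /mxstar tr_tperm_mx map_tperm_mx. Qed.

Lemma unitary_tperm n (i j : 'I_n) : unitary_mx (tperm_mx i j : 'M[R[i]]_n).
Proof.
by rewrite /unitary_mx mxstar_tperm /tperm_mx -perm_mxM tperm2 perm_mx1.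
Qed.

Definition signmx n (k : 'I_n) : 'M[R[i]]_n :=
  diag_mx (\row_j (if j == k then -1 else 1)).
Arguments signmx {n}.

Lemma mxstar_sign n (k : 'I_n) : mxstar (signmx k) = signmx k.
Proof.
apply/matrixP => a b; rewrite /mxstar /signmx !mxE.
case E1 : (b == a); case E2 : (a == b) => //=.
- by rewrite !mulr1n; move/eqP: E1 => ->; case: (a == k); rewrite ?rmorphN rmorph1.
- by move/eqP: E1 E2 => ->; rewrite eqxx.
- by move/eqP: E2 E1 => ->; rewrite eqxx.
- by rewrite !mulr0n /= oppr0.
Qed.

Lemma signmx2 n (k : 'I_n) : signmx k *m signmx k = 1%:M.
Proof.
apply/matrixP => a b; rewrite /signmx mul_diag_mx !mxE.
case E1 : (a == b) => /=.
  by move/eqP: E1 => ->; rewrite !mulr1n; case: (b == k); rewrite ?mulrNN mulr1.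
by rewrite !mulr0n mulr0.
Qed.

Lemma unitary_sign n (k : 'I_n) : unitary_mx (signmx k).
Proof. by rewrite /unitary_mx mxstar_sign signmx2. Qed.

End Star.


Lemma unitary_entry_bound (R : realType) d (G : 'M[R[i]]_d) : unitary_mx G ->
  forall k l, `|complex.Re (G k l)| <= 1 /\ `|complex.Im (G k l)| <= 1.
Proof.
move=> [uG _] k l.
have e := congr1 (fun M : 'M[R[i]]_d => complex.Re (M l l)) uG.
rewrite /= mxE cReS mxE eqxx /= in e.
have hge : forall j, 0 <= complex.Re ((mxstar G) l j * G j l).
  move=> j; rewrite /mxstar !mxE cReM cReJ cImJ.
  by rewrite mulNr opprK addr_ge0 // -expr2 sqr_ge0.
rewrite (bigD1 k) //= in e.
have h2 : 0 <= \sum_(j < d | j != k) complex.Re ((mxstar G) l j * G j l).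
  by apply: sumr_ge0 => j _; apply: hge.
move: e; rewrite /mxstar !mxE cReM cReJ cImJ => e.
set a := complex.Re (G k l) in e *; set b := complex.Im (G k l) in e *.
set s := \sum_(_ < _ | _) _ in e h2.
rewrite !ler_norml; split; apply/andP; split; nra.
Qed.

Section GammaSec.
Variable R : realType.
Variable d : nat.
Context dO (O : measurableType dO) (Pr : probability O R).
Variable Gamma : O -> cmx R d.
Hypothesis mGamma : measurable_fun setT Gamma.
Hypothesis Gamma_unitary : forall w, unitary_mx (Gamma w).
Hypothesis Gamma_haar : is_haar (fun A : set (cmx R d) => Pr (Gamma @^-1` A)).

Lemma goodGamma : goodmx (fun w => (Gamma w : 'M[R[i]]_d)).
Proof.
move=> i j; have [h1 h2] := cmx_entry R d i j; split; split.
- exact: (measurableT_comp h1 mGamma).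
- by exists 1 => w; have [] := unitary_entry_bound _ _ _ (Gamma_unitary w) i j.
- exact: (measurableT_comp h2 mGamma).
- by exists 1 => w; have [] := unitary_entry_bound _ _ _ (Gamma_unitary w) i j.
Qed.

Lemma haarE (U : 'M[R[i]]_d) : unitary_mx U ->
  forall H : cmx R d -> R[i], cmeas H ->
  good (fun w => H (Gamma w)) -> good (fun w => H (Gamma w *m U : cmx R d)) ->
  E Pr (fun w => H (Gamma w *m U : cmx R d)) = E Pr (fun w => H (Gamma w)).
Proof.
move=> uU H [m1 m2] [g1 g2] [g3 g4]; rewrite /E; congr Complex.
- exact: (haar_inv _ _ _ _ _ _ mGamma Gamma_haar _ uU _ m1 g1 g3).
- exact: (haar_inv _ _ _ _ _ _ mGamma Gamma_haar _ uU _ m2 g2 g4).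
Qed.

End GammaSec.
Arguments goodGamma {R d dO O Gamma}.
Arguments haarE {R d dO O Pr Gamma} mGamma Gamma_haar {U}.


Section Vertex.
Variable R : realType.
Variable d : nat.
Context dO (O : measurableType dO) (Pr : probability O R).
Variable Gamma : O -> cmx R d.
Hypothesis mGamma : measurable_fun setT Gamma.
Hypothesis Gamma_unitary : forall w, unitary_mx (Gamma w).
Hypothesis Gamma_haar : is_haar (fun A : set (cmx R d) => Pr (Gamma @^-1` A)).
Variable Pv : 'M[R[i]]_d.
Variable r : nat.
Hypothesis hPv : orth_proj Pv.
Hypothesis hrank : \rank Pv = r.

Definition Yv w : 'M[R[i]]_d := mxstar (Gamma w : 'M[R[i]]_d) *m Pv *m Gamma w.

Lemma goodY : goodmx Yv.
Proof.
have gG := goodGamma mGamma Gamma_unitary.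
apply: goodmx_mul => //; apply: goodmx_mul; last exact: goodmx_cst.
exact: goodmx_star.
Qed.

Definition Mv := mx_expect Pr Yv.

Lemma invM U : unitary_mx U -> mxstar U *m Mv *m U = Mv.
Proof.
move=> uU; rewrite /Mv -mx_expect_mul; last exact: goodY.
have gG := goodGamma mGamma Gamma_unitary.
apply/matrixP => i j; rewrite !mx_expectE.
pose H := fun M : cmx R d => (mxstar (M : 'M[R[i]]_d) *m Pv *m M) i j.
have hH : cmeas H.
  apply: (@cmeasmx_mul R _ (cmx R d) d d d _ (fun M : cmx R d => (M : 'M[R[i]]_d))).
  - apply: cmeasmx_mul; last exact: cmeasmx_cst.
    apply: cmeasmx_star; exact: cmx_id.
  - exact: cmx_id.
have ->: (fun w => (mxstar U *m Yv w *m U) i j) = (fun w => H (Gamma w *m U : cmx R d)).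
  by apply/funext => w; rewrite /H /Yv mxstarM !mulmxA.
rewrite (haarE mGamma Gamma_haar uU H hH).
- by congr E; apply/funext => w; rewrite /H /Yv.
- have := goodY i j; congr good; apply/funext => w; rewrite /H /Yv //.
- have gU : goodmx (fun w => mxstar (Gamma w *m U : 'M[R[i]]_d) *m Pv *m (Gamma w *m U)).
    apply: goodmx_mul; last by apply: goodmx_mul => //; exact: goodmx_cst.
    apply: goodmx_mul; last exact: goodmx_cst.
    by apply: goodmx_star; apply: goodmx_mul => //; exact: goodmx_cst.
  exact: gU.
Qed.

Lemma commM U : unitary_mx U -> Mv *m U = U *m Mv.
Proof.
move=> uU; have e := invM U uU; have [_ h2] := uU.
by rewrite -{2}e !mulmxA h2 mul1mx.
Qed.

Lemma offdiag i j : i != j -> Mv i j = 0.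
Proof.
move=> ne; have e := congr1 (fun M : 'M[R[i]]_d => M i j) (commM _ (unitary_sign _ _ i)).
move: e; rewrite /= /signmx mul_mx_diag mul_diag_mx !mxE eqxx eq_sym (negbTE ne).
rewrite mulr1 mulN1r => /eqP; rewrite -subr_eq0 opprK -mulr2n mulrn_eq0 /=.
by move/eqP.
Qed.

Lemma diag_eq i j : Mv i i = Mv j j.
Proof.
have e := congr1 (fun M : 'M[R[i]]_d => M i j) (commM _ (unitary_tperm _ _ i j)).
by move: e; rewrite /= -xcolE -xrowE !mxE tpermR tpermL.
Qed.

Lemma trY w : \tr (Yv w) = \tr Pv.
Proof.
have [_ h2] := Gamma_unitary w.
by rewrite /Yv mxtrace_mulC mulmxA h2 mul1mx.
Qed.

Lemma trM : \tr Mv = r%:R.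
Proof.
rewrite /mxtrace.
under eq_bigr do rewrite /Mv mx_expectE.
rewrite -ES; last by move=> k; exact: goodY.
rewrite (_ : (fun x => _) = (fun _ => \tr Pv)); last first.
  by apply/funext => w; rewrite -(trY w).
by rewrite E_cst tr_proj ?hrank //; case: hPv.
Qed.

Lemma Mv_scalar (hd : (0 < d)%N) : exists c, Mv = c%:M /\ c * d%:R = r%:R.
Proof.
pose i0 : 'I_d := Ordinal hd.
exists (Mv i0 i0); split.
  apply/matrixP => i j; rewrite [X in _ = X]mxE.
  case: (eqVneq i j) => [<-|ne]; first by rewrite mulr1n (diag_eq i i0).
  by rewrite mulr0n offdiag.
rewrite -trM /mxtrace (eq_bigr (fun _ => Mv i0 i0)); last by move=> i _; exact: diag_eq.
by rewrite sumr_const card_ord mulr_natr.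
Qed.

End Vertex.


Section Alg.
Variable R : realType.
Variables n d : nat.

Lemma mxstar_sum m p (F : 'I_n -> 'M[R[i]]_(m, p)) :
  mxstar (\sum_v F v) = \sum_v mxstar (F v).
Proof.
apply/matrixP => a b; rewrite /mxstar !mxE !summxE rmorph_sum.
by apply: eq_bigr => v _; rewrite !mxE.
Qed.

Lemma dAd (A : 'M[R[i]]_n) v w : A v w = 0 ->
  delta_mx v v *m A *m delta_mx w w = 0.
Proof.
move=> A0; apply/matrixP => x y; rewrite !mxE big1 // => k _.
rewrite !mxE; case: (eqVneq k w) => [->|kw]; last by rewrite mulr0.
rewrite big1 ?mul0r // => l _; rewrite !mxE.
case: (eqVneq l v) => [->|lv]; first by rewrite A0 mulr0.
by rewrite andbF mul0r.
Qed.

Variable G : 'M[R[i]]_d.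
Hypothesis uG : unitary_mx G.
Variable P : 'I_n -> 'M[R[i]]_d.

Definition Xv v := mxstar G *m P v *m G.

Lemma XvM v w : Xv v *m Xv w = mxstar G *m (P v *m P w) *m G.
Proof.
have [_ h2] := uG.
by rewrite /Xv !mulmxA -(mulmxA _ G) h2 mulmx1.
Qed.

Lemma QmxE : Qmx P G = \sum_v (delta_mx v v *t Xv v).
Proof. by []. Qed.

Lemma Q_adj (adj : rel 'I_n) : (forall v w, adj v w -> P v *m P w = 0) ->
  Qmx P G *m (@adjacency_mx R n adj *t (1%:M : 'M[R[i]]_d)) *m Qmx P G = 0.
Proof.
move=> hadj; rewrite QmxE mulmx_suml mulmx_suml.
apply: big1 => v _; rewrite mulmx_sumr; apply: big1 => w _.
rewrite tensmx_mul tensmx_mul mulmx1.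
case h: (adj v w).
  by rewrite XvM hadj // mulmx0 mul0mx tensmx0.
by rewrite dAd ?tens0mx // mxE h.
Qed.

Hypothesis hP : forall v, orth_proj (P v).

Lemma mxstar_Xv v : mxstar (Xv v) = Xv v.
Proof.
have [_ h] := hP v.
by rewrite /Xv !mxstarM mxstarK h mulmxA.
Qed.

Lemma XvXv v : Xv v *m Xv v = Xv v.
Proof. by have [h _] := hP v; rewrite XvM h. Qed.

Lemma Q_orth : orth_proj (Qmx P G).
Proof.
split.
  rewrite QmxE mulmx_suml; apply: eq_bigr => v _.
  rewrite mulmx_sumr (bigD1 v) //= big1 ?addr0.
    by rewrite tensmx_mul mul_delta_mx XvXv.
  move=> w /negbTE wv; rewrite tensmx_mul mul_delta_mx_cond eq_sym wv mulr0n.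
  by rewrite tens0mx.
rewrite QmxE mxstar_sum; apply: eq_bigr => v _.
by rewrite mxstar_tens mxstar_delta mxstar_Xv.
Qed.

End Alg.


Lemma natC (R : realType) k : (k%:R : R[i]) = Complex k%:R 0.
Proof.
elim: k => [//|k IH]; rewrite -addn1 !natrD IH /=.
by apply/eqP; rewrite eq_complex /= addr0 !eqxx.
Qed.

Lemma mxtens_index_eq m p (i j : 'I_m) (k l : 'I_p) :
  (mxtens_index (i, k) == mxtens_index (j, l)) = (i == j) && (k == l).
Proof. by rewrite (can_eq (@mxtens_indexK _ _)) xpair_eqE. Qed.

Theorem lemma2p4 (R : realType) (n d r : nat) (adj : rel 'I_n)
    (adj_sym : symmetric adj) (adj_irr : irreflexive adj)
    (P : 'I_n -> 'M[R[i]]_d) (hr : (0 < r)%N)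
    (hP : @dr_representation R n d r adj P)
    (dO : measure_display) (O : measurableType dO) (Pr : probability O R)
    (Gamma : O -> cmx R d) (mGamma : measurable_fun setT Gamma)
    (Gamma_unitary : forall w, unitary_mx (Gamma w))
    (Gamma_haar : is_haar (fun A : set (cmx R d) => Pr (Gamma @^-1` A))) :
  stochastic_block_decomposition Pr (fun w => Qmx P (Gamma w)) (d%:R / r%:R) /\
  (forall G : 'M[R[i]]_d, unitary_mx G ->
     Qmx P G *m (@adjacency_mx R n adj *t (1%:M : 'M[R[i]]_d)) *m Qmx P G = 0).
Proof.
have [hPr hadjP] := hP.
split; last first.
  by move=> G uG; exact: (Q_adj _ _ _ _ uG P adj hadjP).
have gQ : goodmx (fun w => Qmx P (Gamma w)).
  move=> a b; rewrite /Qmx; under eq_fun => x do rewrite summxE.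
  case/(@mxtens_indexP n d): a => i k; case/(@mxtens_indexP n d): b => j l.
  under eq_fun => x do under eq_bigr => v _ do rewrite tensmxE.
  apply: (@goodS R _ O _ _ (fun v x => delta_mx v v i j * (mxstar (Gamma x) *m P v *m Gamma x) k l)) => v.
  apply: goodM; first exact: good_cst.
  exact: (goodY _ _ _ _ _ mGamma Gamma_unitary (P v) k l).
split.
  by move=> w; exact: (Q_orth _ _ _ _ (Gamma_unitary w) P (fun v => (hPr v).1)).
split; first exact: goodmx_integrable.
pose cst : R[i] := Complex ((d%:R / r%:R)^-1) 0.
have Mcst : forall v, Mv _ _ _ _ Pr Gamma (P v) = cst%:M.
  move=> v; have [pv rv] := hPr v.
  have hd : (0 < d)%N by apply: (leq_trans hr); rewrite -rv rank_leq_row.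
  have [c [-> hc]] := Mv_scalar _ _ _ _ _ _ mGamma Gamma_unitary Gamma_haar _ _ pv rv hd.
  congr scalar_mx; apply: (mulIf (x := d%:R)).
    by rewrite natC; apply/eqP => /eqP; rewrite eq_complex /= eqxx andbT pnatr_eq0 => /eqP d0; move: hd; rewrite d0.
  rewrite /= hc natC /cst natC /=; apply/eqP; rewrite eq_complex /=.
  rewrite !mulr0 !mul0r subr0 addr0 eqxx andbT.
  have d0 : (d%:R : R) != 0 by rewrite pnatr_eq0 -lt0n hd.
  have r0 : (r%:R : R) != 0 by rewrite pnatr_eq0 -lt0n hr.
  by apply/eqP; rewrite invf_div mulfVK.
apply/matrixP => a b; rewrite mx_expectE.
case/(@mxtens_indexP n d): a => i k; case/(@mxtens_indexP n d): b => j l.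
under eq_E do rewrite QmxE summxE.
rewrite ES; last first.
  move=> v; under eq_fun do rewrite tensmxE.
  apply: goodM; first exact: good_cst.
  exact: (goodY _ _ _ _ _ mGamma Gamma_unitary (P v) k l).
have EY : forall v, E Pr (fun w => Xv R n d (Gamma w) P v k l)
    = cst *+ (k == l).
  by move=> v; have := congr1 (fun M : 'M[R[i]]_d => M k l) (Mcst v); rewrite /= mx_expectE mxE.
under eq_bigr => v _ do (under eq_E do rewrite tensmxE).
rewrite (eq_bigr (fun v => delta_mx v v i j * (cst *+ (k == l)))); last first.
  move=> v _; rewrite (EMl _ _ _ Pr (delta_mx v v i j) (fun w => Xv R n d (Gamma w) P v k l)) ?EY //.
  exact: (goodY _ _ _ _ _ mGamma Gamma_unitary (P v) k l).
rewrite mxE mxtens_index_eq.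
case: (eqVneq i j) => [<-|ij] /=.
  rewrite (bigD1 i) //= big1 ?addr0; first by rewrite mxE !eqxx mul1r.
  by move=> v /negbTE vi; rewrite mxE eq_sym vi mul0r.
rewrite mulr0n big1 // => v _; rewrite mxE.
case: (eqVneq i v) => [iv|]; last by rewrite mul0r.
by move: ij; rewrite iv eq_sym => /negbTE ->; rewrite mul0r.
Qed.
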